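(* The function $\mathcal{O}:(0,\infty)^3\to\mathbb{R}$ is locally Lipschitz continuous on $(0,\infty)^3$.
   Context: For $(b_1,b_2,\beta)\in(0,\infty)^3$, $\mathcal{O}(b_1,b_2,\beta)=\inf\Big\{\frac{\int_{\mathbb{R}^2}(|\nabla u_1|^2+|\nabla u_2|^2)dx}{\frac{b_1}{2}\int|u_1|^4dx+\frac{b_2}{2}\int|u_2|^4dx+\beta\int|u_1|^2|u_2|^2dx}: u_i\in H^1(\mathbb{R}^2),\ \|u_i\|_2=1,\ i=1,2\Big\}$. *)

(* Defs.v *)
From HB Require Import structures.
From mathcomp Require Import all_boot all_order all_algebra.
From mathcomp Require Import all_classical all_reals all_analysis.
Set Implicit Arguments. Unset Strict Implicit. Unset Printing Implicit Defensive.
Import Order.TTheory GRing.Theory Num.Theory.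
Import numFieldNormedType.Exports.
Local Open Scope classical_set_scope.
Local Open Scope ring_scope.

Section Sobolev.
Variable R : realType.

Definition leb2 := ((@lebesgue_measure R) \x (@lebesgue_measure R))%E.

Definition dir (b : bool) : R * R := if b then (1, 0) else (0, 1).

Fixpoint iterD (s : seq bool) (f : R * R -> R) : R * R -> R :=
  match s with
  | [::] => f
  | b :: s' => 'D_(dir b) (iterD s' f)
  end.

Definition smooth (f : R * R -> R) : Prop :=
  forall s : seq bool, continuous (iterD s f) /\
    forall (b : bool) (p : R * R), derivable (iterD s f) p (dir b).

Definition test_fun (phi : R * R -> R) : Prop :=
  smooth phi /\ exists M : R, forall p : R * R, M < `|p| -> phi p = 0.

Definition L2 (f : R * R -> R) : Prop :=
  measurable_fun setT f /\ leb2.-integrable setT (fun x => ((f x) ^+ 2)%:E).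

Definition weak_grad (f g1 g2 : R * R -> R) : Prop :=
  forall phi, test_fun phi ->
    (\int[leb2]_x (f x * 'D_(dir true) phi x)%:E
       = - \int[leb2]_x (g1 x * phi x)%:E)%E /\
    (\int[leb2]_x (f x * 'D_(dir false) phi x)%:E
       = - \int[leb2]_x (g2 x * phi x)%:E)%E.

Definition H1_grad (f g1 g2 : R * R -> R) : Prop :=
  L2 f /\ L2 g1 /\ L2 g2 /\ weak_grad f g1 g2.

(* A complex-valued u = a + i c lies in H^1(R^2; C) iff a and c do.
   |u|^2 = a^2 + c^2,  |grad u|^2 = |grad a|^2 + |grad c|^2.
   The set of Rayleigh quotients defining O(b1,b2,beta). *)
Definition quotients (b1 b2 beta : R) : set R :=
  [set q | exists (a1 c1 a2 c2 : R * R -> R)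
              (ga1 ha1 gc1 hc1 ga2 ha2 gc2 hc2 : R * R -> R),
     H1_grad a1 ga1 ha1 /\ H1_grad c1 gc1 hc1 /\
         H1_grad a2 ga2 ha2 /\ H1_grad c2 gc2 hc2 /\
         (\int[leb2]_x ((a1 x) ^+ 2 + (c1 x) ^+ 2)%:E = 1)%E /\
         (\int[leb2]_x ((a2 x) ^+ 2 + (c2 x) ^+ 2)%:E = 1)%E /\
         q = Rintegral leb2 setT (fun x =>
                (ga1 x) ^+ 2 + (ha1 x) ^+ 2 + (gc1 x) ^+ 2 + (hc1 x) ^+ 2
              + (ga2 x) ^+ 2 + (ha2 x) ^+ 2 + (gc2 x) ^+ 2 + (hc2 x) ^+ 2)
           / (b1 / 2 * Rintegral leb2 setT (fun x => ((a1 x) ^+ 2 + (c1 x) ^+ 2) ^+ 2)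
              + b2 / 2 * Rintegral leb2 setT (fun x => ((a2 x) ^+ 2 + (c2 x) ^+ 2) ^+ 2)
              + beta * Rintegral leb2 setT (fun x =>
                   ((a1 x) ^+ 2 + (c1 x) ^+ 2) * ((a2 x) ^+ 2 + (c2 x) ^+ 2)))].

Definition Ocal (b1 b2 beta : R) : R := inf (quotients b1 b2 beta).

End Sobolev.

(* Main.v *)
Require Import Defs.
From HB Require Import structures.
From mathcomp Require Import all_boot all_order all_algebra.
From mathcomp Require Import all_classical all_reals all_analysis.
From mathcomp Require Import lra.
Local Open Scope classical_set_scope.
Local Open Scope ring_scope.
Import Order.TTheory GRing.Theory Num.Theory.
Local Open Scope ring_scope.

Lemma key (R : realType) (b1 b2 b3 b1' b2' b3' c N A1 A2 A3 : R) :
  0 < b1 -> 0 < b2 -> 0 < b3 -> 0 < b1' -> 0 < b2' -> 0 < b3' -> 0 < c ->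
  b1 <= c * b1' -> b2 <= c * b2' -> b3 <= c * b3' ->
  0 <= N -> 0 <= A1 -> 0 <= A2 -> 0 <= A3 ->
  N / (b1' / 2 * A1 + b2' / 2 * A2 + b3' * A3) <=
  c * (N / (b1 / 2 * A1 + b2 / 2 * A2 + b3 * A3)).
Proof.
move=> h1 h2 h3 h1' h2' h3' hc l1 l2 l3 hN a1 a2 a3.
set D := b1 / 2 * A1 + b2 / 2 * A2 + b3 * A3.
set D' := b1' / 2 * A1 + b2' / 2 * A2 + b3' * A3.
have hD : D <= c * D'.
  rewrite /D /D'.
  have e1 : b1 * A1 <= c * b1' * A1 by rewrite ler_wpM2r.
  have e2 : b2 * A2 <= c * b2' * A2 by rewrite ler_wpM2r.
  have e3 : b3 * A3 <= c * b3' * A3 by rewrite ler_wpM2r.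
  lra.
have D'0 : 0 <= D' by rewrite /D' !addr_ge0 ?mulr_ge0 ?divr_ge0 // ltW.
have D0 : 0 <= D by rewrite /D !addr_ge0 ?mulr_ge0 ?divr_ge0 // ltW.
have [->|D'p] := eqVneq D' 0.
  by rewrite invr0 mulr0 mulr_ge0 ?divr_ge0 // ltW.
have D'pos : 0 < D' by rewrite lt_def D'p.
have [eD|Dp] := eqVneq D 0.
  exfalso; move: eD; rewrite /D => eD.
  have z1 : b1 * A1 = 0.
    have : 0 <= b1 * A1 by rewrite mulr_ge0 // ltW.
    have : 0 <= b2 * A2 by rewrite mulr_ge0 // ltW.
    have : 0 <= b3 * A3 by rewrite mulr_ge0 // ltW.
    lra.
  have z2 : b2 * A2 = 0.
    have : 0 <= b1 * A1 by rewrite mulr_ge0 // ltW.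
    have : 0 <= b2 * A2 by rewrite mulr_ge0 // ltW.
    have : 0 <= b3 * A3 by rewrite mulr_ge0 // ltW.
    lra.
  have z3 : b3 * A3 = 0.
    have : 0 <= b1 * A1 by rewrite mulr_ge0 // ltW.
    have : 0 <= b2 * A2 by rewrite mulr_ge0 // ltW.
    have : 0 <= b3 * A3 by rewrite mulr_ge0 // ltW.
    lra.
  move/eqP: z1; rewrite mulf_eq0 gt_eqF //= => /eqP z1.
  move/eqP: z2; rewrite mulf_eq0 gt_eqF //= => /eqP z2.
  move/eqP: z3; rewrite mulf_eq0 gt_eqF //= => /eqP z3.
  by move: D'p; rewrite /D' z1 z2 z3 !mulr0 !addr0 eqxx.
have Dpos : 0 < D by rewrite lt_def Dp.
rewrite mulrA ler_pdivrMr // mulrAC ler_pdivlMr //.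
by rewrite (mulrC c) -mulrA; apply: ler_wpM2l.
Qed.

Section S.
Variable R : realType.

Lemma quot_ge0 (b1 b2 b3 : R) : 0 < b1 -> 0 < b2 -> 0 < b3 ->
  forall q, quotients b1 b2 b3 q -> 0 <= q.
Proof.
move=> h1 h2 h3 q [a1 [c1 [a2 [c2 [ga1 [ha1 [gc1 [hc1 [ga2 [ha2 [gc2 [hc2 [H1 [H2 [H3 [H4 [I1 [I2 ->]]]]]]]]]]]]]]]]]].
apply: divr_ge0; first by apply: Rintegral_ge0 => x _; rewrite !addr_ge0 // sqr_ge0.
rewrite !addr_ge0 // mulr_ge0 ?divr_ge0 ?(ltW h1) ?(ltW h2) ?(ltW h3) //;
  apply: Rintegral_ge0 => x _; rewrite ?exprn_ge0 ?mulr_ge0 ?addr_ge0 // sqr_ge0.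
all: done.
Qed.

Lemma Ocal_ge0 (b1 b2 b3 : R) : 0 < b1 -> 0 < b2 -> 0 < b3 -> 0 <= Ocal b1 b2 b3.
Proof.
move=> h1 h2 h3; rewrite /Ocal.
case: (pselect (exists q, quotients b1 b2 b3 q)) => [ne|ne].
  by apply: lb_le_inf => // q; apply: quot_ge0.
have -> : quotients b1 b2 b3 = set0.
  by apply/seteqP; split=> q // Sq; apply: ne; exists q.
by rewrite inf0.
Qed.

Lemma Ocal_scale (b1 b2 b3 b1' b2' b3' c : R) :
  0 < b1 -> 0 < b2 -> 0 < b3 -> 0 < b1' -> 0 < b2' -> 0 < b3' -> 0 < c ->
  b1 <= c * b1' -> b2 <= c * b2' -> b3 <= c * b3' ->
  Ocal b1' b2' b3' <= c * Ocal b1 b2 b3.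
Proof.
move=> h1 h2 h3 h1' h2' h3' hc l1 l2 l3; rewrite /Ocal.
case: (pselect (exists q, quotients b1 b2 b3 q)) => [ne|ne]; last first.
  have -> : quotients b1 b2 b3 = set0.
    by apply/seteqP; split=> q // Sq; apply: ne; exists q.
  have -> : quotients b1' b2' b3' = set0.
    apply/seteqP; split=> q // [a1 [c1 [a2 [c2 [ga1 [ha1 [gc1 [hc1 [ga2 [ha2 [gc2 [hc2 [H1 [H2 [H3 [H4 [I1 [I2 _]]]]]]]]]]]]]]]]]].
    apply: ne; eexists; exists a1, c1, a2, c2, ga1, ha1, gc1, hc1, ga2, ha2, gc2, hc2.
    by do 6 (split; first by []).
  by rewrite inf0 mulr0.
have lbS : has_lbound (quotients b1' b2' b3').
  by exists 0 => q; apply: quot_ge0.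
rewrite mulrC -ler_pdivrMr //.
apply: lb_le_inf => // q [a1 [c1 [a2 [c2 [ga1 [ha1 [gc1 [hc1 [ga2 [ha2 [gc2 [hc2 [H1 [H2 [H3 [H4 [I1 [I2 ->]]]]]]]]]]]]]]]]]].
rewrite ler_pdivrMr // mulrC.
apply: le_trans; first apply: (ge_inf lbS).
  exists a1, c1, a2, c2, ga1, ha1, gc1, hc1, ga2, ha2, gc2, hc2.
  by do 6 (split; first by []).
apply: key => //.
- by apply: Rintegral_ge0 => x _; rewrite !addr_ge0 // sqr_ge0.
- by apply: Rintegral_ge0 => x _; rewrite exprn_ge0 // addr_ge0 // sqr_ge0.
- by apply: Rintegral_ge0 => x _; rewrite exprn_ge0 // addr_ge0 // sqr_ge0.
- by apply: Rintegral_ge0 => x _; rewrite mulr_ge0 // addr_ge0 // sqr_ge0.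
Qed.
End S.

Theorem lemma2p2 (R : realType) (b1 b2 beta : R) :
  0 < b1 -> 0 < b2 -> 0 < beta ->
  exists r : R, 0 < r /\ exists L : R,
    forall x1 x2 x3 y1 y2 y3 : R,
      0 < x1 -> 0 < x2 -> 0 < x3 -> 0 < y1 -> 0 < y2 -> 0 < y3 ->
      `|x1 - b1| < r -> `|x2 - b2| < r -> `|x3 - beta| < r ->
      `|y1 - b1| < r -> `|y2 - b2| < r -> `|y3 - beta| < r ->
      `|Ocal x1 x2 x3 - Ocal y1 y2 y3| <= L * (`|x1 - y1| + `|x2 - y2| + `|x3 - y3|).
Proof.
move=> h1 h2 h3.
set m := Num.min b1 (Num.min b2 beta) / 2.
have m1 : m <= b1 / 2 by rewrite ler_pM2r // ge_min lexx.
have m2 : m <= b2 / 2 by rewrite ler_pM2r // !ge_min lexx orbT.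
have m3 : m <= beta / 2 by rewrite ler_pM2r // !ge_min lexx !orbT.
have mp : 0 < m by rewrite divr_gt0 // !lt_min h1 h2 h3.
set O0 := Ocal b1 b2 beta.
have O0p : 0 <= O0 by apply: Ocal_ge0.
exists m; split => //; exists (2 * O0 / m).
move=> x1 x2 x3 y1 y2 y3 px1 px2 px3 py1 py2 py3 ex1 ex2 ex3 ey1 ey2 ey3.
move: ex1 ex2 ex3 ey1 ey2 ey3; rewrite !ltr_norml => /andP[ex1 ex1'] /andP[ex2 ex2']
  /andP[ex3 ex3'] /andP[ey1 ey1'] /andP[ey2 ey2'] /andP[ey3 ey3'].
set d := `|x1 - y1| + `|x2 - y2| + `|x3 - y3|.
have n1 := normr_ge0 (x1 - y1). have n2 := normr_ge0 (x2 - y2). have n3 := normr_ge0 (x3 - y3).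
have d1 : `|x1 - y1| <= d by rewrite /d; lra.
have d2 : `|x2 - y2| <= d by rewrite /d; lra.
have d3 : `|x3 - y3| <= d by rewrite /d; lra.
have dp : 0 <= d by rewrite /d; lra.
set k := d / m.
have kp : 0 <= k by rewrite divr_ge0 // ltW.
have kx : forall z, m <= z -> d <= k * z.
  move=> z hz; rewrite /k mulrAC ler_pdivlMr //; exact: ler_wpM2l.
have kE : k = d / m by [].
clearbody k.
have Ox := @Ocal_ge0 R _ _ _ px1 px2 px3.
have Oy := @Ocal_ge0 R _ _ _ py1 py2 py3.
have F3 : Ocal y1 y2 y3 <= 2 * O0.
  apply: Ocal_scale => //; lra.
have F4 : Ocal x1 x2 x3 <= 2 * O0.
  apply: Ocal_scale => //; lra.
have gx1 := kx x1 ltac:(lra). have gx2 := kx x2 ltac:(lra). have gx3 := kx x3 ltac:(lra).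
have gy1 := kx y1 ltac:(lra). have gy2 := kx y2 ltac:(lra). have gy3 := kx y3 ltac:(lra).
have ax1 := ler_norm (x1 - y1). have ax2 := ler_norm (x2 - y2). have ax3 := ler_norm (x3 - y3).
have ay1 : y1 - x1 <= `|x1 - y1| by rewrite distrC ler_norm.
have ay2 : y2 - x2 <= `|x2 - y2| by rewrite distrC ler_norm.
have ay3 : y3 - x3 <= `|x3 - y3| by rewrite distrC ler_norm.
have F1 : Ocal x1 x2 x3 <= (1 + k) * Ocal y1 y2 y3.
  by apply: Ocal_scale => //; [lra | rewrite mulrDl mul1r; lra ..].
have F2 : Ocal y1 y2 y3 <= (1 + k) * Ocal x1 x2 x3.
  by apply: Ocal_scale => //; [lra | rewrite mulrDl mul1r; lra ..].
have F5 : k * Ocal y1 y2 y3 <= k * (2 * O0) by apply: ler_wpM2l.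
have F6 : k * Ocal x1 x2 x3 <= k * (2 * O0) by apply: ler_wpM2l.
have -> : 2 * O0 / m * d = k * (2 * O0) by rewrite kE mulrC mulrA mulrAC.
move: F1 F2; rewrite !mulrDl !mul1r => F1 F2.
move: F1 F2 F5 F6; clear.
move=> F1 F2 F5 F6.
rewrite ler_norml; apply/andP; split; lra.
Qed.
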